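(* Let $n\ge 2$, $s\in D^n$, and let $f\in\mathrm{Ann}(s^{(n-1)})$ be nonzero with $\Delta(f,s)\neq 0$. Then: (i) every nonzero $g\in\mathrm{Ann}(s)$ satisfies $\deg g\ge n-\deg f$; (ii) if moreover $f\in\mathrm{Min}(s^{(n-1)})$, then every nonzero $g\in\mathrm{Ann}(s)$ satisfies $\deg g\ge \max\{e_{n-1}(f),0\}+\deg f=\max\{n-\deg f,\deg f\}$, where $e_{n-1}(f)=n-2\deg f$. In particular $L(s)\ge\max\{n-\deg f,\deg f\}$.
   Context: Let $D$ be a commutative integral domain with $1\neq 0$. For $s=(s_1,\dots,s_n)\in D^n$ put $\underline{s}=s_1x^{-1}+\cdots+s_nx^{-n}$, an element of the Laurent polynomial ring $D[x,x^{-1}]$; for a Laurent polynomial $F$, $F_k$ denotes the coefficient of $x^k$. For $1\le i\le n$, $s^{(i)}=(s_1,\dots,s_i)$. A polynomial $f\in D[x]$ is an annihilator of $s$, written $f\in\mathrm{Ann}(s)$, if $f=0$, or $d=\deg f\ge 0$ and $(f\cdot\underline{s})_{d-j}=0$ for all $j$ with $d+1\le j\le n$ (equivalently $\sum_{k=0}^{d}f_ks_{j-d+k}=0$ for $d+1\le j\le n$). $\mathrm{Min}(s)$ is the set of nonzero annihilators of $s$ of least degree, and the linear complexity $L(s)$ is that least degree. For nonzero $f\in D[x]$, the discrepancy is $\Delta(f,s)=(f\cdot\underline{s})_{\deg f-n}=\sum_{k=0}^{\deg f}f_ks_{n-\deg f+k}$. *)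

(* Defs.v *)
From HB Require Import structures.
From mathcomp Require Import all_boot all_order all_algebra.
Set Implicit Arguments. Unset Strict Implicit. Unset Printing Implicit Defensive.
Import Order.TTheory GRing.Theory Num.Theory.
Local Open Scope ring_scope.

(* A finite sequence s = (s_1,...,s_n) in D^n is represented by a list
   [:: s_1; ...; s_n] : seq D (so n = size s).
   sterm s i = s_i for 1 <= i <= n, and 0 for any other integer i
   (the Laurent polynomial s_ = s_1 x^-1 + ... + s_n x^-n has no other terms). *)
Definition sterm (D : idomainType) (s : seq D) (i : int) : D :=
  match i with
  | Posz m.+1 => nth 0 s m
  | _ => 0
  end.

Definition pdeg (D : idomainType) (f : {poly D}) : nat := (size f).-1.

(* (f * s_)_m : coefficient of x^m in the Laurent polynomial f * s_ *)
Definition lcoef (D : idomainType) (f : {poly D}) (s : seq D) (m : int) : D :=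
  \sum_(k < size f) f`_k * sterm s (k%:Z - m).

Definition spre (D : idomainType) (s : seq D) (i : nat) : seq D := take i s.

Definition Ann (D : idomainType) (s : seq D) (f : {poly D}) : Prop :=
  f = 0 \/
  (forall j : nat, (pdeg f < j)%N -> (j <= size s)%N ->
     lcoef f s ((pdeg f)%:Z - j%:Z) = 0).

Definition Min (D : idomainType) (s : seq D) (f : {poly D}) : Prop :=
  [/\ f != 0, Ann s f &
      forall g : {poly D}, g != 0 -> Ann s g -> (pdeg f <= pdeg g)%N].

Definition discrepancy (D : idomainType) (f : {poly D}) (s : seq D) : D :=
  lcoef f s ((pdeg f)%:Z - (size s)%:Z).

Definition eexp (D : idomainType) (n : nat) (f : {poly D}) : int :=
  n%:Z - 2 * (pdeg f)%:Z.

(* Main.v *)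
Require Import Defs.
From HB Require Import structures.
From mathcomp Require Import all_boot all_order all_algebra.
Import Order.TTheory GRing.Theory Num.Theory.
Local Open Scope ring_scope.

Lemma sterm_take (D : idomainType) (s : seq D) (m : nat) (i : int) :
  i <= m%:Z -> sterm (take m s) i = sterm s i.
Proof.
case: i => [[|k]|k] //= Hi; rewrite nth_take //; by rewrite lez_nat in Hi.
Qed.

Lemma lcoef_take (D : idomainType) (f : {poly D}) (s : seq D) (m j : nat) :
  (j <= m)%N -> lcoef f (take m s) ((pdeg f)%:Z - j%:Z) = lcoef f s ((pdeg f)%:Z - j%:Z).
Proof.
move=> hjm; apply: eq_bigr => k _; rewrite sterm_take //.
have hk : (k <= pdeg f)%N.
  by rewrite /pdeg -ltnS (leq_trans (ltn_ord k)) // -add1n -leq_subLR subn1.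
rewrite opprB addrCA; apply: ler_wnDr; last by rewrite lez_nat.
by rewrite subr_le0 lez_nat.
Qed.

Lemma int_id (k l n d e : int) : l - (e - (k + (n - d))) = k - (d - (l + (n - e))).
Proof. rewrite !opprB !addrA (addrC l k); exact: addrAC. Qed.

Lemma core (D : idomainType) (n : nat) (s : seq D) (f g : {poly D}) :
  size s = n -> f != 0 -> g != 0 -> Ann (spre s n.-1) f ->
  discrepancy f s != 0 -> Ann s g -> (n <= pdeg f + pdeg g)%N.
Proof.
move=> hs hf hg [hf0|hA] hd [hg0|hB]; try by rewrite ?hf0 ?hg0 eqxx in hf hg.
rewrite leqNgt; apply/negP => hlt.
set d := pdeg f in hA hd hlt *; set e := pdeg g in hB hlt *.
have sf : size f = d.+1 by rewrite /d /pdeg prednK // size_poly_gt0.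
have sg : size g = e.+1 by rewrite /e /pdeg prednK // size_poly_gt0.
have hdn : (d <= n)%N by apply: leq_trans (leq_addr e d) (ltnW hlt).
have hen : (e <= n)%N by apply: leq_trans (leq_addl d e) (ltnW hlt).
pose T := \sum_(k < size f) \sum_(l < size g)
   f`_k * (g`_l * sterm s (l%:Z - (e%:Z - (k + (n - d))%N%:Z))).
have T0 : T = 0.
  rewrite /T big1 // => k _; rewrite -mulr_sumr.
  have := hB (k + (n - d))%N.
  rewrite /lcoef => ->; first by rewrite mulr0.
    rewrite -ltn_subRL in hlt; exact: leq_trans hlt (leq_addl _ _).
  rewrite hs -{2}(subnKC hdn) leq_add2r.
  by have := ltn_ord k; rewrite {2}sf ltnS.
have T1 : T = g`_e * discrepancy f s.
  rewrite /T exchange_big /=.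
  have E : forall l : 'I_(size g), \sum_(k < size f)
      f`_k * (g`_l * sterm s (l%:Z - (e%:Z - (k + (n - d))%N%:Z)))
      = g`_l * lcoef f s (d%:Z - (l + (n - e))%N%:Z).
    move=> l; rewrite /lcoef mulr_sumr; apply: eq_bigr => k _.
    by rewrite mulrCA !PoszD -!subzn // int_id.
  rewrite (eq_bigr _ (fun l _ => E l)).
  have npos : (0 < n)%N by apply: leq_ltn_trans hlt.
  rewrite sg big_ord_recr /= big1 ?add0r.
    by rewrite (subnKC hen) /discrepancy hs.
  move=> l _ /=.
  have hl : (l + (n - e) <= n.-1)%N.
    by rewrite -ltnS prednK // -{2}(subnKC hen) ltn_add2r.
  rewrite -(@lcoef_take _ f s _ _ hl) hA ?mulr0 //.
    have h : (d < n - e)%N by rewrite ltn_subRL addnC.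
    exact: leq_trans h (leq_addl _ _).
  by rewrite size_takel // hs leq_pred.
have ge0 : g`_e != 0 by rewrite /e /pdeg -lead_coefE lead_coef_eq0.
by move: (mulf_neq0 ge0 hd); rewrite -T1 T0 eqxx.
Qed.

Lemma ann_take (D : idomainType) (s : seq D) (m : nat) (g : {poly D}) :
  Ann s g -> Ann (take m s) g.
Proof.
case=> [->|hB]; [by left | right] => j hj.
rewrite size_take_min leq_min => /andP [hjm hjs].
by rewrite (@lcoef_take _ g s _ _ hjm) hB.
Qed.

Theorem mainTheorem2 (D : idomainType) (n : nat) (s : seq D)
  (hn : (2 <= n)%N) (hs : size s = n)
  (f : {poly D}) (hf0 : f != 0) (hfA : Ann (spre s n.-1) f)
  (hdisc : discrepancy f s != 0) :
  (forall g : {poly D}, g != 0 -> Ann s g -> n%:Z - (pdeg f)%:Z <= (pdeg g)%:Z) /\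
  (Min (spre s n.-1) f ->
     (forall g : {poly D}, g != 0 -> Ann s g ->
        Num.max (eexp n f) 0 + (pdeg f)%:Z <= (pdeg g)%:Z /\
        Num.max (n%:Z - (pdeg f)%:Z) (pdeg f)%:Z <= (pdeg g)%:Z) /\
     (forall g : {poly D}, Min s g ->
        Num.max (n%:Z - (pdeg f)%:Z) (pdeg f)%:Z <= (pdeg g)%:Z)).
Proof.
have P1 : forall g : {poly D}, g != 0 -> Ann s g -> n%:Z - (pdeg f)%:Z <= (pdeg g)%:Z.
  move=> g hg hgA; rewrite lerBlDr -PoszD lez_nat addnC.
  exact: core hs hf0 hg hfA hdisc hgA.
have P2 : Min (spre s n.-1) f -> forall g : {poly D}, g != 0 -> Ann s g ->
    Num.max (n%:Z - (pdeg f)%:Z) (pdeg f)%:Z <= (pdeg g)%:Z.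
  case=> _ _ hmin g hg hgA.
  rewrite ge_max P1 //= lez_nat; apply: hmin hg _; exact: ann_take.
split=> // hM; split; last by move=> g [hg hgA _]; exact: P2.
move=> g hg hgA; split; last exact: P2.
have -> : Num.max (eexp n f) 0 + (pdeg f)%:Z = Num.max (n%:Z - (pdeg f)%:Z) (pdeg f)%:Z.
  by rewrite addr_maxl add0r /eexp mulr_natl mulr2n opprD addrA subrK.
exact: P2.
Qed.
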